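(* Let $\mathbf{A}=(A,\mathcal{R})$ and $\mathbf{B}=(B,\mathcal{S})$ be $\mathbf{K}$-objects and $f:\mathbf{A}\to\mathbf{B}$ a $\mathbf{K}$-morphism. Then the family $\Phi f$ with components $(\Phi f)_X:(\Phi\mathbf{B})X\to(\Phi\mathbf{A})X$, $(\Phi f)_X(g/\!\approx_{\mathbf{B}})=gf/\!\approx_{\mathbf{A}}$ for $g:B\to X$, is a well-defined natural transformation $\Phi\mathbf{B}\to\Phi\mathbf{A}$.
   Context: $\mathbf{T}$ is the category whose objects are pairs $(A,\mathcal{R})$ with $A$ a set and $\mathcal{R}$ a family of subsets of $A$, and whose morphisms $f:(A,\mathcal{R})\to(B,\mathcal{S})$ are maps $f:A\to B$ with $f^{-1}[S]\in\mathcal{R}$ for all $S\in\mathcal{S}$. Fix a simple graph with vertex set $V=\{v_1,\dots,v_6\}$ and edge set $\mathcal{G}$ (two-element subsets of $V$) with no non-identity automorphism. For a $\mathbf{T}$-object $(A,\mathcal{R})$ let $\Psi(A,\mathcal{R})=(\overline{A},\overline{\mathcal{R}})$ with $\overline{A}=A\sqcup V$ and $\overline{\mathcal{R}}$ consisting of $\{v_i\}$, $\overline{A}\setminus\{v_i\}$ ($i=1,\dots,6$), $G$, $\overline{A}\setminus G$ ($G\in\mathcal{G}$), and $\{v_1,v_2,v_3\}\cup R$, $\{v_4,v_5,v_6\}\cup(A\setminus R)$ ($R\in\mathcal{R}$); for a map $f$ let $\Psi f=f\sqcup\mathrm{id}_V$. $\mathbf{K}$ is the full subcategory of $\mathbf{T}$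 on the objects of the form $\Psi(A,\mathcal{R})$. For a $\mathbf{K}$-object $\mathbf{A}=(A,\mathcal{R})$ and a set $X$, let $\approx_{\mathbf{A}}$ be the relation on maps $A\to X$ given by $g_1\approx_{\mathbf{A}}g_2$ iff $g_1=g_2$, or $g_1[A]=g_2[A]$ is a two-element set $\{x,x'\}$ and $g_1^{-1}[\{x\}]=g_2^{-1}[\{x'\}]\in\mathcal{R}$ (this is an equivalence relation). The set functor $\Phi\mathbf{A}$ is given by $(\Phi\mathbf{A})X=\{g\,;\,g:A\to X\}/\!\approx_{\mathbf{A}}$ and $((\Phi\mathbf{A})h)(g/\!\approx_{\mathbf{A}})=hg/\!\approx_{\mathbf{A}}$ for $h:X\to Y$. *)

(* Defs.v *)
From mathcomp Require Import all_boot all_fingroup.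
From Stdlib Require Import ClassicalEpsilon.
Set Implicit Arguments. Unset Strict Implicit. Unset Printing Implicit Defensive.

(* Vertex set V = {v_1,...,v_6} is 'I_6 (v_{i+1} is the ordinal i).
   A subset of a set T is a predicate T -> Prop; a family of subsets is
   (T -> Prop) -> Prop.  A T-object is a pair (T, fam). *)

Definition V := 'I_6.

Definition is_Tmor (T U : Type) (R : (T -> Prop) -> Prop) (S : (U -> Prop) -> Prop)
  (f : T -> U) : Prop :=
  forall Ss, S Ss -> R (fun t => Ss (f t)).

(* The functor Psi on objects: carrier A + V, family PsiFam E R. *)
Definition PsiFam (E : {set {set V}}) (A : Type) (R : (A -> Prop) -> Prop)
  : ((A + V) -> Prop) -> Prop :=
  fun Ss =>
    (exists i : V, Ss = (fun z => z = inr i) \/ Ss = (fun z => z <> inr i))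
 \/ (exists G : {set V}, G \in E /\
       (Ss = (fun z => exists v, z = inr v /\ v \in G)
        \/ Ss = (fun z => ~ exists v, z = inr v /\ v \in G)))
 \/ (exists Rs : A -> Prop, R Rs /\
       (Ss = (fun z => match z with inl a => Rs a | inr v => (val v < 3)%N end)
        \/ Ss = (fun z => match z with inl a => ~ Rs a | inr v => (3 <= val v)%N end))).

Definition approx (T : Type) (R : (T -> Prop) -> Prop) (X : Type) (g1 g2 : T -> X) : Prop :=
  g1 = g2 \/
  exists x x' : X, x <> x' /\
    (forall y, (exists t, g1 t = y) <-> (y = x \/ y = x')) /\
    (forall y, (exists t, g2 t = y) <-> (y = x \/ y = x')) /\
    (fun t => g1 t = x) = (fun t => g2 t = x') /\
    R (fun t => g1 t = x).

(* (Phi A) X : the set of ~~_A-classes of maps T -> X (classes as predicates). *)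
Definition PhiObj (T : Type) (R : (T -> Prop) -> Prop) (X : Type) : Type :=
  { P : (T -> X) -> Prop | exists g : T -> X, P = approx R g }.

Definition cls (T : Type) (R : (T -> Prop) -> Prop) (X : Type) (g : T -> X)
  : PhiObj R X :=
  exist _ (approx R g) (ex_intro _ g erefl).

Definition rep (T : Type) (R : (T -> Prop) -> Prop) (X : Type) (c : PhiObj R X)
  : T -> X :=
  proj1_sig (constructive_indefinite_description _ (proj2_sig c)).

Definition PhiMap (T : Type) (R : (T -> Prop) -> Prop) (X Y : Type) (h : X -> Y)
  (c : PhiObj R X) : PhiObj R Y :=
  cls R (fun t => h (rep c t)).

(* Main.v *)
From Stdlib Require Import FunctionalExtensionality PropExtensionality ProofIrrelevance Classical ClassicalEpsilon.
Require Import Defs.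
From mathcomp Require Import all_boot all_fingroup.
Set Implicit Arguments. Unset Strict Implicit. Unset Printing Implicit Defensive.

Section Gen.
Variables (T : Type) (R : (T -> Prop) -> Prop) (X : Type).

Lemma approx_pt (g1 g2 : T -> X) x x' :
  (forall y, (exists t, g1 t = y) <-> (y = x \/ y = x')) ->
  (forall y, (exists t, g2 t = y) <-> (y = x \/ y = x')) ->
  (fun t => g1 t = x) = (fun t => g2 t = x') -> x <> x' ->
  forall t, (g1 t = x /\ g2 t = x') \/ (g1 t = x' /\ g2 t = x).
Proof.
move=> H1 H2 Heq Hne t.
have E := f_equal (fun P => P t) Heq; simpl in E.
have [A1|A1] : g1 t = x \/ g1 t = x' by apply/H1; exists t.
- left; split => //; rewrite -E; exact A1.
- have [B1|B1] : g2 t = x \/ g2 t = x' by apply/H2; exists t.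
  + by right.
  + exfalso; have : g1 t = x by rewrite E. congruence.
Qed.

Lemma approx_refl (g : T -> X) : approx R g g.
Proof. by left. Qed.

Lemma approx_sym (g1 g2 : T -> X) : approx R g1 g2 -> approx R g2 g1.
Proof.
case=> [->|[x [x' [Hne [H1 [H2 [Heq HR]]]]]]]; first by left.
right; exists x', x; split; first by move=> e; apply: Hne.
split; first by move=> y; rewrite H2; tauto.
split; first by move=> y; rewrite H1; tauto.
split; first by rewrite Heq.
by rewrite -Heq.
Qed.

Lemma approx_trans (g1 g2 g3 : T -> X) :
  approx R g1 g2 -> approx R g2 g3 -> approx R g1 g3.
Proof.
case=> [->//|[x [x' [Hne [H1 [H2 [Heq HR]]]]]]].
case=> [<-|[y [y' [Hne' [H1' [H2' [Heq' HR']]]]]]].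
  right; exists x, x'; tauto.
left; apply: functional_extensionality => t.
have P1 := approx_pt H1 H2 Heq Hne t.
have P2 := approx_pt H1' H2' Heq' Hne' t.
have Y1 : y = x \/ y = x' by apply/H2; apply/H1'; left.
have Y2 : y' = x \/ y' = x' by apply/H2; apply/H1'; right.
case: P1 => [[? ?]|[? ?]]; case: P2 => [[? ?]|[? ?]];
  case: Y1 => ?; case: Y2 => ?; congruence.
Qed.

Lemma approx_map Y (h : X -> Y) (u v : T -> X) :
  approx R u v -> approx R (fun t => h (u t)) (fun t => h (v t)).
Proof.
case=> [->|[x [x' [Hne [H1 [H2 [Heq HR]]]]]]]; first by left.
have P := approx_pt H1 H2 Heq Hne.
case: (classic (h x = h x')) => Hh.
  left; apply: functional_extensionality => t.
  by case: (P t) => [[-> ->]|[-> ->]].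
right; exists (h x), (h x'); split => //.
have img : forall w : T -> X, (forall y, (exists t, w t = y) <-> (y = x \/ y = x')) ->
    forall y, (exists t, h (w t) = y) <-> (y = h x \/ y = h x').
  move=> w Hw y; split.
  - case=> t <-. have [->|->] : w t = x \/ w t = x' by apply/Hw; exists t.
    + by left.
    + by right.
  - case=> ->.
    + have [t Ht] : exists t, w t = x by apply/Hw; left.
      by exists t; rewrite Ht.
    + have [t Ht] : exists t, w t = x' by apply/Hw; right.
      by exists t; rewrite Ht.
split; first exact: img.
split; first exact: img.
have E : (fun t => h (u t) = h x) = (fun t => u t = x).
  apply: functional_extensionality => t; apply: propositional_extensionality.
  by split; case: (P t) => [[e1 e2]|[e1 e2]] e; congruence.
split; last by rewrite E.
apply: functional_extensionality => t; apply: propositional_extensionality.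
by split; case: (P t) => [[e1 e2]|[e1 e2]] e; congruence.
Qed.

Lemma approx_rep (g : T -> X) : approx R g (rep (cls R g)).
Proof.
rewrite /rep; case: ClassicalEpsilon.constructive_indefinite_description => g' /= e.
by rewrite e; apply: approx_refl.
Qed.

Lemma cls_eq (g1 g2 : T -> X) : approx R g1 g2 -> cls R g1 = cls R g2.
Proof.
move=> H.
have E : approx R g1 = approx R g2.
  apply: functional_extensionality => g; apply: propositional_extensionality.
  split=> H'.
  - exact: approx_trans (approx_sym H) H'.
  - exact: approx_trans H H'.
rewrite /cls.
move: (ex_intro (fun g => approx R g1 = approx R g) g1 erefl)
      (ex_intro (fun g => approx R g2 = approx R g) g2 erefl).
rewrite E => p q; by rewrite (proof_irrelevance _ p q).
Qed.

End Gen.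

Lemma approx_comp (T U : Type) (RT : (T -> Prop) -> Prop) (RU : (U -> Prop) -> Prop)
  (f : T -> U) X (g1 g2 : U -> X) :
  is_Tmor RT RU f -> (forall Q, RT Q -> (exists z, Q z) /\ (exists z, ~ Q z)) ->
  approx RU g1 g2 -> approx RT (fun a => g1 (f a)) (fun a => g2 (f a)).
Proof.
move=> Hf Hp.
case=> [->|[x [x' [Hne [H1 [H2 [Heq HR]]]]]]]; first by left.
have HR' := Hf _ HR.
have [[a1 Ha1] [a2 Ha2]] := Hp _ HR'; simpl in Ha1, Ha2.
have P := approx_pt H1 H2 Heq Hne.
right; exists x, x'; split => //.
split.
  move=> y; split; first by case=> t <-; apply/H1; exists (f t).
  case=> ->; first by exists a1.
  by exists a2; case: (P (f a2)) => [[]|[]].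
split.
  move=> y; split; first by case=> t <-; apply/H2; exists (f t).
  case=> ->.
  - by exists a2; case: (P (f a2)) => [[]|[]].
  - by exists a1; case: (P (f a1)) => [[]|[]] //; congruence.
split => //.
exact: (f_equal (fun Pr => fun a => Pr (f a)) Heq).
Qed.

Theorem lemma3p4
  (E : {set {set V}})
  (HE : forall G : {set V}, G \in E -> #|G| = 2)
  (Hrigid : forall s : {perm V},
      (forall G : {set V}, (G \in E) = ((s @: G) \in E)) -> s = 1%g)
  (A : Type) (R : (A -> Prop) -> Prop)
  (B : Type) (S : (B -> Prop) -> Prop)
  (f : A + V -> B + V)
  (Hf : is_Tmor (PsiFam E R) (PsiFam E S) f) :
  exists eta : forall X : Type, PhiObj (PsiFam E S) X -> PhiObj (PsiFam E R) X,
    (forall (X : Type) (g : B + V -> X),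
        eta X (cls (PsiFam E S) g) = cls (PsiFam E R) (fun a => g (f a))) /\
    (forall (X Y : Type) (h : X -> Y) (c : PhiObj (PsiFam E S) X),
        eta Y (PhiMap h c) = PhiMap h (eta X c)).
Proof.
have Hp : forall Q, PsiFam E R Q -> (exists z, Q z) /\ (exists z, ~ Q z).
  move=> Q [[i [->|->]]|[[G [GE [->|->]]]|[Rs [_ [->|->]]]]].
  - have [j Hj] : exists j : V, j != i.
      case: (i =P ord0) => [->|/eqP ne]; last by exists ord0; rewrite eq_sym.
      by exists (inord 1); apply/eqP => /(f_equal val); rewrite /= inordK.
    split; first by exists (inr i).
    by exists (inr j) => -[] e; rewrite e eqxx in Hj.
  - have [j Hj] : exists j : V, j != i.
      case: (i =P ord0) => [->|/eqP ne]; last by exists ord0; rewrite eq_sym.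
      by exists (inord 1); apply/eqP => /(f_equal val); rewrite /= inordK.
    split; last by exists (inr i).
    by exists (inr j) => -[] e; rewrite e eqxx in Hj.
  - have c2 := HE _ GE.
    have /set0Pn [v Hv] : G != set0 by apply/eqP => e; rewrite e cards0 in c2.
    have /set0Pn [w Hw] : ~: G != set0.
      by apply/eqP => e; move: c2; rewrite -(setCK G) e setC0 cardsT card_ord.
    rewrite in_setC in Hw.
    split; first by exists (inr v), v.
    by exists (inr w) => -[w' [[<-]]]; rewrite (negbTE Hw).
  - have c2 := HE _ GE.
    have /set0Pn [v Hv] : G != set0 by apply/eqP => e; rewrite e cards0 in c2.
    have /set0Pn [w Hw] : ~: G != set0.
      by apply/eqP => e; move: c2; rewrite -(setCK G) e setC0 cardsT card_ord.
    rewrite in_setC in Hw.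
    split; last by exists (inr v) => H; apply: H; exists v.
    by exists (inr w) => -[w' [[<-]]]; rewrite (negbTE Hw).
  - by split; [exists (inr (ord0 : V)) | exists (inr (ord_max : V))].
  - by split; [exists (inr (ord_max : V)) | exists (inr (ord0 : V))].
exists (fun X c => cls (PsiFam E R) (fun a => rep c (f a))).
have key : forall X (g : B + V -> X),
    cls (PsiFam E R) (fun a => rep (cls (PsiFam E S) g) (f a)) =
    cls (PsiFam E R) (fun a => g (f a)).
  move=> X g; apply: cls_eq; apply: approx_comp Hf Hp _.
  exact/approx_sym/approx_rep.
split; first exact: key.
move=> X Y h c; rewrite /PhiMap key; apply: cls_eq.
exact: (approx_map h (approx_rep (PsiFam E R) (fun a => rep c (f a)))).
Qed.
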